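(* Let $q$ be a root of unity with $q^4\neq1$, let $\sigma\in\mathbb C^\times$ be general, $w\in\mathbb C$, and $(\vec s,\vec t)\in E^0_{\sigma,w}$. Let $V$ have basis $\{v_i:i\in\mathbb Z/D\}$. Then $\rho(\alpha_0)v_i=\lambda_iv_i$, $\rho(\alpha_1)v_i=q^{2i+1}\sigma s_iv_{i+1}+q^{-2i+1}\sigma^{-1}t_{i-1}v_{i-1}$, $\rho(\alpha_\infty)v_i=s_iv_{i+1}+t_{i-1}v_{i-1}$ define a representation $\rho:\mathcal S_q(\Sigma_{1,1})\to\mathrm{End}(V)$, and moreover $\rho(A_0)=z_0\,\mathrm{id}_V$ and $\rho(p)=w\,\mathrm{id}_V$.
   Context: $\mathcal S_q(\Sigma_{1,1})$ is the Kauffman bracket skein algebra of the one-punctured torus (framed links in $\Sigma_{1,1}\times(-1,1)$ modulo the Kauffman bracket relation and trivial loop $=-q^2-q^{-2}$). It is generated by the slope $0,1,\infty$ curves $\alpha_0,\alpha_1,\alpha_\infty$ subject to $q\alpha_0\alpha_\infty-q^{-1}\alpha_\infty\alpha_0=(q^2-q^{-2})\alpha_1$, $q\alpha_1\alpha_0-q^{-1}\alpha_0\alpha_1=(q^2-q^{-2})\alpha_\infty$, $q\alpha_\infty\alpha_1-q^{-1}\alpha_1\alpha_\infty=(q^2-q^{-2})\alpha_0$; the peripheral curve is $p=q\alpha_0\alpha_\infty\alpha_1-q^2\alpha_0^2-q^2\alpha_1^2-q^{-2}\alpha_\infty^2+q^2+q^{-2}$. For $q$ a root of unity, $n=\mathrm{ord}(q^2)$,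 $D=n$, $T_D$ is the Chebyshev polynomial with $T_D(t+t^{-1})=t^D+t^{-D}$, and $A_0=T_D(\alpha_0)$. For $\sigma\in\mathbb C^\times$ set $z_0=\sigma^D+\sigma^{-D}$, $\lambda_i=q^{2i}\sigma+q^{-2i}\sigma^{-1}$, $\hat\lambda_i=q^{2i}\sigma-q^{-2i}\sigma^{-1}$ ($i\in\mathbb Z/D$). $\sigma$ is general if $z_0\neq\pm2$, or $z_0=-2$ and $n$ is even (equivalently, all $\hat\lambda_i\neq0$). For general $\sigma$ and $w\in\mathbb C$: $r_i(\sigma,w)=\dfrac{w+q^{4i+2}\sigma^2+q^{-4i-2}\sigma^{-2}}{\hat\lambda_i\hat\lambda_{i+1}}$ and $E^0_{\sigma,w}=\{(s_1,\dots,s_D,t_1,\dots,t_D)\in\mathbb C^{2D}: s_it_i=r_i(\sigma,w)\ \forall i\}$ (indices mod $D$). *)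

(* Defs.v *)
From HB Require Import structures.
From mathcomp Require Import all_boot all_order all_algebra.
From mathcomp Require Import reals complex.
Set Implicit Arguments. Unset Strict Implicit. Unset Printing Implicit Defensive.
Import Order.TTheory GRing.Theory Num.Theory.
Local Open Scope ring_scope.

Section SkeinDefs.
Variable C : fieldType.

(* Chebyshev polynomial T_k evaluated at a square matrix:
   T_0 = 2, T_1 = x, T_{k+2} = x T_{k+1} - T_k,
   so that T_k(t + t^-1) = t^k + t^-k. *)
Fixpoint cheb_aux (m : nat) (A : 'M[C]_m) (k : nat) : 'M[C]_m * 'M[C]_m :=
  match k with
  | 0 => (2%:M, A)
  | k'.+1 => let: (a, b) := cheb_aux A k' in (b, A *m b - a)
  end.
Definition chebT (m : nat) (A : 'M[C]_m) (k : nat) : 'M[C]_m := (cheb_aux A k).1.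

(* The defining relations of S_q(Sigma_{1,1}) in the generators
   alpha_0, alpha_1, alpha_infty.  An assignment of matrices (endomorphisms of
   C^m, acting on column vectors) to the generators extends to an algebra map
   rho : S_q(Sigma_{1,1}) -> End(C^m) iff these relations hold. *)
Definition skein_rep (q : C) (m : nat) (a0 a1 ainf : 'M[C]_m) : Prop :=
  [/\ q *: (a0 *m ainf) - q^-1 *: (ainf *m a0) = (q ^+ 2 - q ^- 2) *: a1,
      q *: (a1 *m a0) - q^-1 *: (a0 *m a1) = (q ^+ 2 - q ^- 2) *: ainf &
      q *: (ainf *m a1) - q^-1 *: (a1 *m ainf) = (q ^+ 2 - q ^- 2) *: a0].

Definition periph_mx (q : C) (m : nat) (a0 a1 ainf : 'M[C]_m) : 'M[C]_m :=
  q *: (a0 *m ainf *m a1) - q ^+ 2 *: (a0 *m a0) - q ^+ 2 *: (a1 *m a1)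
  - q ^- 2 *: (ainf *m ainf) + (q ^+ 2 + q ^- 2)%:M.

(* Data attached to sigma, indices i in Z/D represented by 'I_D. *)
Definition z0 (D : nat) (sigma : C) : C := sigma ^+ D + sigma ^- D.
Definition lam (q sigma : C) (i : nat) : C := q ^+ (2 * i) * sigma + (q ^+ (2 * i))^-1 * sigma^-1.
Definition lamh (q sigma : C) (i : nat) : C := q ^+ (2 * i) * sigma - (q ^+ (2 * i))^-1 * sigma^-1.

Definition general_sigma (n : nat) (sigma : C) : Prop :=
  sigma != 0 /\
  ((z0 n sigma != 2 /\ z0 n sigma != -2) \/ (z0 n sigma = -2 /\ ~~ odd n)).

Definition r_coef (q sigma w : C) (D : nat) (i : 'I_D) : C :=
  (w + q ^+ (4 * i + 2) * sigma ^+ 2 + (q ^+ (4 * i + 2))^-1 * sigma ^- 2)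
  / (lamh q sigma i * lamh q sigma (ordS i)).

Definition in_E0 (q sigma w : C) (D : nat) (s t : 'I_D -> C) : Prop :=
  forall i : 'I_D, s i * t i = r_coef q sigma w i.

(* Matrices of rho(alpha_0), rho(alpha_1), rho(alpha_infty) in the basis v_i:
   entry (j, i) is the coefficient of v_j in rho(.) v_i. *)
Definition rho0 (q sigma : C) (D : nat) : 'M[C]_D :=
  \matrix_(j, i) ((j == i)%:R * lam q sigma i).
Definition rho1 (q sigma : C) (D : nat) (s t : 'I_D -> C) : 'M[C]_D :=
  \matrix_(j, i) ((j == ordS i)%:R * (q ^+ (2 * i + 1) * sigma * s i)
                 + (j == ord_pred i)%:R * (q * (q ^+ (2 * i))^-1 * sigma^-1 * t (ord_pred i))).
Definition rhoinf (D : nat) (s t : 'I_D -> C) : 'M[C]_D :=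
  \matrix_(j, i) ((j == ordS i)%:R * s i + (j == ord_pred i)%:R * t (ord_pred i)).

End SkeinDefs.

(* Main.v *)
Require Import Defs.
From HB Require Import structures.
From mathcomp Require Import all_boot all_order all_algebra.
From mathcomp Require Import reals complex.
From mathcomp Require Import ring.
Import Order.TTheory GRing.Theory Num.Theory.
Local Open Scope ring_scope.

Section H.
Variable C : fieldType.

Lemma sum_coll1 D (f : 'I_D -> C) a x :
  \sum_k f k * ((k == a)%:R * x) = f a * x.
Proof.
rewrite (bigD1 a) //= eqxx mul1r big1 ?addr0 // => k /negbTE ->.
by rewrite mul0r mulr0.
Qed.

Lemma sum_coll2 D (f : 'I_D -> C) a b x y :
  \sum_k f k * ((k == a)%:R * x + (k == b)%:R * y) = f a * x + f b * y.
Proof.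
under eq_bigr => k _ do rewrite mulrDr.
by rewrite big_split /= !sum_coll1.
Qed.

Variables (q : C) (D : nat).
Hypothesis hz : (q ^+ 2) ^+ D = 1.

Lemma qS (i : 'I_D) : q ^+ (2 * ordS i) = q ^+ (2 * i) * q ^+ 2.
Proof. by rewrite !exprM -exprSr /= (expr_mod _ hz). Qed.

Hypothesis q0 : q != 0.

Lemma qP (i : 'I_D) : q ^+ (2 * ord_pred i) = q ^+ (2 * i) / q ^+ 2.
Proof.
have := qS (ord_pred i); rewrite ord_predK => ->.
by rewrite mulfK // expf_neq0.
Qed.

Lemma qodd k : q ^+ (2 * k + 1) = q ^+ (2 * k) * q.
Proof. by rewrite addn1 exprSr. Qed.

Lemma q4 k : q ^+ (4 * k + 2) = (q ^+ (2 * k)) ^+ 2 * q ^+ 2.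
Proof. by rewrite exprD -exprM [(2 * k * 2)%N]mulnC mulnA. Qed.

Variables (sigma : C) (s t : 'I_D -> C).

Lemma sum_rho0 (f : 'I_D -> C) i :
  \sum_k f k * rho0 q sigma D k i = f i * lam q sigma i.
Proof. by under eq_bigr do rewrite /rho0 mxE; rewrite sum_coll1. Qed.
Lemma sum_rho1 (f : 'I_D -> C) i :
  \sum_k f k * rho1 q sigma s t k i = f (ordS i) * (q ^+ (2 * i + 1) * sigma * s i)
    + f (ord_pred i) * (q * (q ^+ (2 * i))^-1 * sigma^-1 * t (ord_pred i)).
Proof. by under eq_bigr do rewrite /rho1 mxE; rewrite sum_coll2. Qed.
Lemma sum_rhoinf (f : 'I_D -> C) i :
  \sum_k f k * rhoinf s t k i = f (ordS i) * s i + f (ord_pred i) * t (ord_pred i).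
Proof. by under eq_bigr do rewrite /rhoinf mxE; rewrite sum_coll2. Qed.

Hypothesis s0 : sigma != 0.

Ltac expand := rewrite !mxE ?sum_rho0 ?sum_rho1 ?sum_rhoinf;
  rewrite ?mxE ?sum_rho0 ?sum_rho1 ?sum_rhoinf;
  unfold rho0, rho1, rhoinf, lam; rewrite ?mxE ?ordSK ?ord_predK ?qodd ?qS ?qP.

Lemma rel1 : q *: (rho0 q sigma D *m rhoinf s t) - q^-1 *: (rhoinf s t *m rho0 q sigma D)
  = (q ^+ 2 - q ^- 2) *: rho1 q sigma s t.
Proof.
apply/matrixP => j i; expand.
have Q0 : q ^+ (2 * i) != 0 by rewrite expf_neq0.
by field; rewrite s0 Q0 q0.
Qed.


Lemma rel2 : q *: (rho1 q sigma s t *m rho0 q sigma D) - q^-1 *: (rho0 q sigma D *m rho1 q sigma s t)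
  = (q ^+ 2 - q ^- 2) *: rhoinf s t.
Proof.
apply/matrixP => j i; expand.
have Q0 : q ^+ (2 * i) != 0 by rewrite expf_neq0.
by field; rewrite s0 Q0 q0.
Qed.

Lemma nz (x : C) : x != 0 -> x - x^-1 != 0 -> x * x - 1 != 0.
Proof.
move=> x0; apply: contra => /eqP h; apply/eqP.
have -> : x - x^-1 = (x * x - 1) / x by field.
by rewrite h mul0r.
Qed.

Variable w : C.
Hypothesis hl : forall k : nat, lamh q sigma k != 0.
Hypothesis hst : in_E0 q sigma w s t.

Lemma nzs (i : 'I_D) :
  [/\ q ^+ (2 * i) * sigma * (q ^+ (2 * i) * sigma) - 1 != 0,
      q ^+ (2 * i) * sigma * (q ^+ (2 * i) * sigma) + - q ^+ 2 * q ^+ 2 != 0 &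
      q ^+ (2 * i) * q ^+ 2 * sigma * (q ^+ (2 * i) * q ^+ 2 * sigma) - 1 != 0].
Proof.
have Q0 : q ^+ (2 * i) != 0 by rewrite expf_neq0.
have h k : q ^+ (2 * k) * sigma * (q ^+ (2 * k) * sigma) - 1 != 0.
  apply: nz; first by rewrite mulf_neq0 ?expf_neq0.
  by have := hl k; rewrite /lamh invfM.
split; first exact: h.
  have := h (ord_pred i); rewrite qP; apply: contra => /eqP e; apply/eqP.
  have -> : q ^+ (2 * i) / q ^+ 2 * sigma * (q ^+ (2 * i) / q ^+ 2 * sigma) - 1
    = (q ^+ (2 * i) * sigma * (q ^+ (2 * i) * sigma) + - q ^+ 2 * q ^+ 2) / (q ^+ 2 * q ^+ 2).
    by field; rewrite q0.
  by rewrite e mul0r.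
by have := h (ordS i); rewrite qS.
Qed.

Lemma rel3 : q *: (rhoinf s t *m rho1 q sigma s t) - q^-1 *: (rho1 q sigma s t *m rhoinf s t)
  = (q ^+ 2 - q ^- 2) *: rho0 q sigma D.
Proof.
apply/matrixP => j i; expand.
have Q0 : q ^+ (2 * i) != 0 by rewrite expf_neq0.
case: (eqVneq j i) => [->|ne]; last first.
  rewrite /= ?(mul0r, mul1r, add0r, addr0, mulr0); by field; rewrite s0 Q0 q0.

set p := ord_pred i.
apply/eqP; rewrite -subr_eq0; apply/eqP.
pose Q := q ^+ (2 * i).
transitivity ((Q * q^+2 * sigma - (Q * q^+2 * sigma)^-1) * (s i * t i - r_coef q sigma w i)
   - (Q / q^+2 * sigma - (Q / q^+2 * sigma)^-1) * (s p * t p - r_coef q sigma w p)); last first.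
  by rewrite !hst !subrr !mulr0 subrr.
rewrite /r_coef /lamh /p ?q4 ?ordSK ?ord_predK ?qS ?qP /Q.
rewrite /= ?(mul0r, mul1r, add0r, addr0, mulr0).
have [n1 n2 n3] := nzs i.
field; by rewrite s0 Q0 q0 n1 n2 n3.
Qed.

Lemma periph : periph_mx q (rho0 q sigma D) (rho1 q sigma s t) (rhoinf s t) = w%:M.
Proof.
apply/matrixP => j i; rewrite /periph_mx; expand.
have Q0 : q ^+ (2 * i) != 0 by rewrite expf_neq0.
case: (eqVneq j i) => [->|ne]; last first.
  rewrite /= ?(mul0r, mul1r, add0r, addr0, mulr0, mulr0n, mulr1n); by field; rewrite s0 Q0 q0.
set p := ord_pred i.
apply/eqP; rewrite -subr_eq0; apply/eqP.
pose X := q ^+ (2 * i) * sigma.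
transitivity ((q^+2 * X^+2 - q^-2) * (s i * t i - r_coef q sigma w i)
   + (q^+2 * X^-2 - q^-2) * (s p * t p - r_coef q sigma w p)); last first.
  by rewrite !hst !subrr !mulr0 addr0.
rewrite /r_coef /lamh /p ?q4 ?ordSK ?ord_predK ?qS ?qP /X.
rewrite /= ?(mul0r, mul1r, add0r, addr0, mulr0, mulr0n, mulr1n).
have [n1 n2 n3] := nzs i.
field; by rewrite s0 Q0 q0 n1 n2 n3.
Qed.

End H.

Section Cheb.
Variable C : fieldType.

Lemma cheb_diag D (x : 'I_D -> C) (hx : forall i, x i != 0) k :
  cheb_aux (\matrix_(j, i) ((j == i)%:R * (x i + (x i)^-1))) k =
  (\matrix_(j, i) ((j == i)%:R * (x i ^+ k + (x i ^+ k)^-1)),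
   \matrix_(j, i) ((j == i)%:R * (x i ^+ k.+1 + (x i ^+ k.+1)^-1))).
Proof.
elim: k => [|k IH] /=.
  congr pair; apply/matrixP => j i; rewrite !mxE //.
  by case: (j == i); rewrite /= ?mulr1n ?mulr0n ?mul1r ?mul0r ?expr0 ?invr1.
rewrite IH; congr pair; apply/matrixP => j i; rewrite !mxE.
under eq_bigr do rewrite !mxE.
rewrite sum_coll1 ?mxE.
case: (j == i); rewrite /= ?mul1r ?mul0r ?subr0 //.
have := hx i; set y := x i => y0.
have yk : y ^+ k != 0 by rewrite expf_neq0.
rewrite !exprS; by field; rewrite y0 yk.
Qed.

Lemma cheb_rho0 (q sigma : C) D (hz : (q ^+ 2) ^+ D = 1) (q0 : q != 0) (s0 : sigma != 0) :
  chebT (rho0 q sigma D) D = (z0 D sigma)%:M.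
Proof.
have -> : rho0 q sigma D = \matrix_(j, i) ((j == i)%:R *
   (q ^+ (2 * i) * sigma + (q ^+ (2 * i) * sigma)^-1)).
  by apply/matrixP => j i; rewrite !mxE /lam invfM.
rewrite /chebT cheb_diag /=; last by move=> i; rewrite mulf_neq0 ?expf_neq0.
apply/matrixP => j i; rewrite !mxE exprMn [q ^+ (2 * i)]exprM (exprAC (q ^+ 2) i D) hz expr1n !mul1r /z0.
by case: (j == i); rewrite /= ?mul1r ?mul0r ?mulr1n ?mulr0n.
Qed.

End Cheb.

Lemma lamh_nz (C : numFieldType) (q sigma : C) D (hz : (q ^+ 2) ^+ D = 1) (q0 : q != 0)
  (hs : general_sigma D sigma) k : lamh q sigma k != 0.
Proof.
case: hs => s0 hs.
have x0 : q ^+ (2 * k) * sigma != 0 by rewrite mulf_neq0 ?expf_neq0.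
rewrite /lamh -invfM; set x := q ^+ (2 * k) * sigma in x0 *.
apply/negP => /eqP h.
have hx2 : x ^+ 2 == 1 by rewrite expr2 {1}(subr0_eq h) mulVf.
have hsD : sigma ^+ D = x ^+ D.
  by rewrite /x exprMn [q ^+ (2 * k)]exprM (exprAC (q ^+ 2) k D) hz expr1n mul1r.
have h22 : (2 : C) != -2.
  by rewrite -subr_eq0 opprK -natrD pnatr_eq0.
have c1 : sigma ^+ D = 1 -> False.
  move=> e; have ez : z0 D sigma = 2 by rewrite /z0 e invr1.
  case: hs => [[a _]|[a _]]; first by rewrite ez eqxx in a.
  by move: h22; rewrite -a ez eqxx.
move: hx2; rewrite sqrf_eq1 => /orP [] /eqP hx.
  by apply: c1; rewrite hsD hx expr1n.
move: hsD; rewrite hx -signr_odd.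
case hD: (odd D) => /= e; last by apply: c1; rewrite e.
have ez : z0 D sigma = -2 by rewrite /z0 e invrN1 -opprD.
case: hs => [[_ a]|[_ a]]; first by rewrite ez eqxx in a.
by rewrite hD in a.
Qed.

Theorem mainTheorem5 (R : realType) (q : R[i]) (D : nat)
  (hq2 : D.-primitive_root (q ^+ 2))   (* q root of unity, D = n = ord(q^2) *)
  (hq4 : q ^+ 4 != 1)
  (sigma : R[i]) (hsigma : general_sigma D sigma)
  (w : R[i]) (s t : 'I_D -> R[i]) (hst : in_E0 q sigma w s t) :
  skein_rep q (rho0 q sigma D) (rho1 q sigma s t) (rhoinf s t)
  /\ chebT (rho0 q sigma D) D = (z0 D sigma)%:M
  /\ periph_mx q (rho0 q sigma D) (rho1 q sigma s t) (rhoinf s t) = w%:M.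
Proof.
have hz : (q ^+ 2) ^+ D = 1 := prim_expr_order hq2.
have Dp : (0 < D)%N := prim_order_gt0 hq2.
have q0 : q != 0.
  apply/eqP => e; move: hz; rewrite e expr0n /= expr0n eqn0Ngt Dp /= => /eqP.
  by rewrite eq_sym oner_eq0.
have s0 : sigma != 0 by case: hsigma.
have hl := @lamh_nz _ q sigma D hz q0 hsigma.
split; first split.
- exact: rel1.
- exact: rel2.
- exact: (@rel3 _ q D hz q0 sigma s t s0 w hl hst).
split; first exact: cheb_rho0.
exact: (@periph _ q D hz q0 sigma s t s0 w hl hst).
Qed.
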